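(* Let $N\ge1$, $\mathcal D=\{1,\dots,N\}$, and let $\mathcal G_{el}$ be an undirected graph on $\mathcal D$ with neighbor sets $\mathcal N_i$. For each $i$ let $C_{ti},L^C_{ti},R^C_{ti},R_{Li}>0$ and gains satisfying $k^C_{1,i}<1$, $k^C_{2,i}<R^C_{ti}$, $k^C_{3,i}>0$; for each edge let $R_{ij}=R_{ji}>0$. Fix $\bar\sigma>0$, set $\eta_i=\bar\sigma C_{ti}$, $p^C_{22,i}=\frac{L^C_{ti}\eta_i}{C_{ti}(1-k^C_{1,i})}$, $P_i^C=\mathrm{diag}\big(\eta_i,p^C_{22,i},\frac{k^C_{3,i}}{L^C_{ti}}p^C_{22,i}\big)$ and $\mathbf P^C=\mathrm{diag}(P_1^C,\dots,P_N^C)$. Then $(\mathbf F^C)^T\mathbf P^C+\mathbf P^C\mathbf F^C\le 0$.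
   Context: $e_1=(1,0,0)^T$. $F_i^C=\begin{bmatrix}0&\frac{1}{C_{ti}}&0\\ \frac{k^C_{1,i}-1}{L^C_{ti}}&\frac{k^C_{2,i}-R^C_{ti}}{L^C_{ti}}&\frac{k^C_{3,i}}{L^C_{ti}}\\ 0&-1&0\end{bmatrix}$. $\mathbf F^C\in\mathbb{R}^{3N\times3N}$ is the closed-loop matrix of the network of current-controlled units: its $(i,i)$ block is $F_i^C-\Big(\frac{1}{R_{Li}C_{ti}}+\sum_{j\in\mathcal N_i}\frac{1}{R_{ij}C_{ti}}\Big)e_1e_1^T$, its $(i,j)$ block for $j\ne i$ is $\frac{1}{R_{ij}C_{ti}}e_1e_1^T$ if $j\in\mathcal N_i$ and $0$ otherwise. Matrix inequalities are in the semidefinite sense. *)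

(* Defs.v *)
From HB Require Import structures.
From mathcomp Require Import all_boot all_order all_algebra.
Set Implicit Arguments. Unset Strict Implicit. Unset Printing Implicit Defensive.
Import Order.TTheory GRing.Theory Num.Theory.
Local Open Scope ring_scope.

Definition nsd (R : realFieldType) (n : nat) (M : 'M[R]_n) : Prop :=
  forall x : 'cV[R]_n, (x^T *m M *m x) 0 0 <= 0.

Definition Floc (R : realFieldType) (Ct Lt Rt k1 k2 k3 : R) : 'M[R]_3 :=
  \matrix_(r < 3, c < 3)
    match nat_of_ord r, nat_of_ord c with
    | 0, 1 => 1 / Ct
    | 1, 0 => (k1 - 1) / Lt
    | 1, 1 => (k2 - Rt) / Lt
    | 1, 2 => k3 / Lt
    | 2, 1 => -1
    | _, _ => 0
    end.

Definition E11 (R : realFieldType) : 'M[R]_3 := delta_mx 0 0.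

(* Closed-loop network matrix F^C, block (i,j) of size 3x3.
   adj is the edge relation of G_el (N_i = [pred j | adj i j]). *)
Definition FC (R : realFieldType) (N : nat) (adj : rel 'I_N)
  (Ct Lt Rt RL k1 k2 k3 : 'I_N -> R) (Rl : 'I_N -> 'I_N -> R) :=
  \mxblock_(i < N, j < N)
    (if i == j then
       Floc (Ct i) (Lt i) (Rt i) (k1 i) (k2 i) (k3 i)
       - (1 / (RL i * Ct i) + \sum_(l | adj i l) 1 / (Rl i l * Ct i)) *: E11 R
     else if adj i j then (1 / (Rl i j * Ct i)) *: E11 R else 0 : 'M[R]_3).

Definition Ploc (R : realFieldType) (sigma Ct Lt k1 k3 : R) : 'M[R]_3 :=
  let eta := sigma * Ct in
  let p22 := Lt * eta / (Ct * (1 - k1)) in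
  diag_mx (\row_(r < 3)
    match nat_of_ord r with
    | 0 => eta
    | 1 => p22
    | _ => k3 / Lt * p22
    end).

Definition PC (R : realFieldType) (N : nat) (sigma : R)
  (Ct Lt k1 k3 : 'I_N -> R) :=
  \mxblock_(i < N, j < N)
    (if i == j then Ploc sigma (Ct i) (Lt i) (k1 i) (k3 i) else 0 : 'M[R]_3).

(* Main.v *)
Require Import Defs.
From HB Require Import structures.
From mathcomp Require Import all_boot all_order all_algebra ring lra.
Import Order.TTheory GRing.Theory Num.Theory.
Local Open Scope ring_scope.

Require Import Defs.
From HB Require Import structures.
From mathcomp Require Import all_boot all_order all_algebra ring lra.
Import Order.TTheory GRing.Theory Num.Theory.
Local Open Scope ring_scope.

Lemma quad3 (R : realFieldType) (A : 'M[R]_3) (y z : 'cV[R]_3) :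
  (y^T *m A *m z) 0 0 = \sum_b \sum_a y a 0 * A a b * z b 0.
Proof.
rewrite !mxE; apply: eq_bigr => b _; rewrite !mxE big_distrl /=.
by apply: eq_bigr => a _; rewrite !mxE.
Qed.
Lemma locdiag (R : realFieldType) (sigma Ct Lt Rt k1 k2 k3 c : R) (y : 'cV[R]_3) :
  0 < Ct -> 0 < Lt -> k1 < 1 ->
  (y^T *m (Ploc sigma Ct Lt k1 k3 *m (Floc Ct Lt Rt k1 k2 k3 - c *: E11 R)) *m y) 0 0
  = Lt * (sigma * Ct) / (Ct * (1 - k1)) * ((k2 - Rt) / Lt) * (y 1 0)^+2
    - c * (sigma * Ct) * (y 0 0)^+2.
Proof.
move=> hC hL hk.
rewrite quad3 /Ploc /Floc /E11.
rewrite !(big_ord_recr, big_ord0) /= !mxE !(big_ord_recr, big_ord0) /= !mxE /=.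
have e0 : widen_ord (leqnSn 2) (widen_ord (leqnSn 1) ord_max) = 0 :> 'I_3 by apply/val_inj.
have e1 : widen_ord (leqnSn 2) ord_max = 1 :> 'I_3 by apply/val_inj.
have e2 : ord_max = 2 :> 'I_3 by apply/val_inj.
rewrite e0 e1 e2 !mulr1n !mulr0n.
have hC' : Ct != 0 by rewrite gt_eqF.
have hL' : Lt != 0 by rewrite gt_eqF.
have hk' : 1 - k1 != 0 by rewrite subr_eq0 gt_eqF.
by field; rewrite hL' hk' hC'.
Qed.

Lemma locoff (R : realFieldType) (sigma Ct Lt k1 k3 s : R) (y z : 'cV[R]_3) :
  (y^T *m (Ploc sigma Ct Lt k1 k3 *m (s *: E11 R)) *m z) 0 0
  = s * (sigma * Ct) * y 0 0 * z 0 0.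
Proof.
rewrite quad3 /Ploc /E11.
rewrite !(big_ord_recr, big_ord0) /= !mxE !(big_ord_recr, big_ord0) /= !mxE /=.
have e0 : widen_ord (leqnSn 2) (widen_ord (leqnSn 1) ord_max) = 0 :> 'I_3 by apply/val_inj.
have e1 : widen_ord (leqnSn 2) ord_max = 1 :> 'I_3 by apply/val_inj.
have e2 : ord_max = 2 :> 'I_3 by apply/val_inj.
rewrite e0 e1 e2 !mulr1n !mulr0n.
ring.
Qed.
Lemma quadT (R : realFieldType) n (A : 'M[R]_n) (x : 'cV[R]_n) :
  (x^T *m A *m x) 0 0 = (x^T *m A^T *m x) 0 0.
Proof.
transitivity ((x^T *m A *m x)^T 0 0); first by rewrite [RHS]mxE.
by rewrite !trmx_mul trmxK mulmxA.
Qed.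

Lemma blockquad (R : realFieldType) N (B : 'I_N -> 'I_N -> 'M[R]_3) (D : 'I_N -> 'M[R]_3)
  (x : 'cV[R]_(\sum_(i<N) 3)) :
  (forall i, (D i)^T = D i) ->
  let F := \mxblock_(i<N, j<N) B i j in
  let P := \mxblock_(i<N,j<N) (if i == j then D i else 0 : 'M_3) in
  (x^T *m (F^T *m P + P *m F) *m x) 0 0 =
  2%:R * \sum_i \sum_j ((submxcol x i)^T *m (D i *m B i j) *m submxcol x j) 0 0.
Proof.
move=> hD F P.
have PT : P^T = P.
  rewrite /P tr_mxblock; apply: eq_mxblock => i j.
  case: eqVneq => [->|ne]; rewrite ?eqxx ?hD ?trmx0 //.
have xP : x^T *m P = \mxrow_j ((submxcol x j)^T *m D j).
  rewrite -{1}(submxcolK x) tr_mxcol /P mul_mxrow_mxblock; apply: eq_mxrow => j.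
  rewrite (bigD1 j) //= eqxx big1 ?addr0 // => k /negbTE ->; by rewrite mulmx0.
have key : (x^T *m (P *m F) *m x) 0 0 =
    \sum_i \sum_j ((submxcol x i)^T *m (D i *m B i j) *m submxcol x j) 0 0.
  rewrite mulmxA xP /F mul_mxrow_mxblock.
  have -> : forall Z : 'M[R]_(1, \sum_(i<N) 3), Z *m x = Z *m \mxcol_j submxcol x j by move=> Z; rewrite submxcolK.
  rewrite mul_mxrow_mxcol summxE exchange_big /=; apply: eq_bigr => i _.
  rewrite mulmx_suml summxE; apply: eq_bigr => j _; by rewrite !mulmxA.
rewrite mulmxDr mulmxDl mxE key.
have -> : (x^T *m (F^T *m P) *m x) 0 0 = (x^T *m (P *m F) *m x) 0 0.
  by rewrite quadT trmx_mul trmxK PT.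
by rewrite key mulr2n mulrDl mul1r.
Qed.
Lemma lap (R : realFieldType) N (a : 'I_N -> 'I_N -> R) (u : 'I_N -> R) :
  (forall i j, a i j = a j i) -> (forall i j, 0 <= a i j) ->
  0 <= \sum_i \sum_j a i j * (u i ^+ 2 - u i * u j).
Proof.
move=> sym pos.
set S := \sum_i _.
have h : S + S = \sum_i \sum_j a i j * (u i - u j) ^+ 2.
  rewrite {2}/S exchange_big /= -big_split /=; apply: eq_bigr => i _.
  rewrite -big_split /=; apply: eq_bigr => j _; rewrite (sym j i); ring.
have : 0 <= S + S.
  rewrite h; apply: sumr_ge0 => i _; apply: sumr_ge0 => j _.
  by apply: mulr_ge0 => //; apply: sqr_ge0.
lra.
Qed.

Theorem proposition3 (R : realFieldType) (N : nat) (hN : (1 <= N)%N)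
  (adj : rel 'I_N)
  (adj_sym : forall i j, adj i j = adj j i)
  (adj_irr : forall i, ~~ adj i i)
  (Ct Lt Rt RL k1 k2 k3 : 'I_N -> R) (Rl : 'I_N -> 'I_N -> R)
  (hCt : forall i, 0 < Ct i) (hLt : forall i, 0 < Lt i)
  (hRt : forall i, 0 < Rt i) (hRL : forall i, 0 < RL i)
  (hk1 : forall i, k1 i < 1) (hk2 : forall i, k2 i < Rt i)
  (hk3 : forall i, 0 < k3 i)
  (hRl_sym : forall i j, adj i j -> Rl i j = Rl j i)
  (hRl_pos : forall i j, adj i j -> 0 < Rl i j)
  (sigma : R) (hsigma : 0 < sigma) :
  nsd ((FC adj Ct Lt Rt RL k1 k2 k3 Rl)^T *m PC sigma Ct Lt k1 k3
       + PC sigma Ct Lt k1 k3 *m FC adj Ct Lt Rt RL k1 k2 k3 Rl).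
Proof.
move=> x; rewrite /FC /PC blockquad; last by move=> i; rewrite /Ploc tr_diag_mx.
set y := submxcol x.
set u := fun i => y i 0 0.
set a := fun i j => if adj i j then 1 / Rl i j else 0.
set neg := fun i => Lt i * (sigma * Ct i) / (Ct i * (1 - k1 i)) * ((k2 i - Rt i) / Lt i) * (y i 1 0)^+2.
have hneg : forall i, neg i <= 0.
  move=> i; rewrite /neg; apply: mulr_le0_ge0; last exact: sqr_ge0.
  apply: mulr_ge0_le0.
    apply: divr_ge0; first by apply: mulr_ge0; [exact: ltW | apply: mulr_ge0; exact: ltW].
    by apply: mulr_ge0; [exact: ltW | rewrite subr_ge0 ltW].
  by apply: mulr_le0_ge0; [rewrite subr_le0 ltW | rewrite invr_ge0 ltW].
have rowi : forall i, \sum_j ((y i)^T *m (Ploc sigma (Ct i) (Lt i) (k1 i) (k3 i) *m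
   (if i == j then Floc (Ct i) (Lt i) (Rt i) (k1 i) (k2 i) (k3 i)
       - (1 / (RL i * Ct i) + \sum_(l | adj i l) 1 / (Rl i l * Ct i)) *: E11 R
     else if adj i j then (1 / (Rl i j * Ct i)) *: E11 R else 0)) *m y j) 0 0
   = neg i - sigma / RL i * u i ^+ 2 - sigma * \sum_j a i j * (u i ^+ 2 - u i * u j).
  move=> i.
  have hC' : Ct i != 0 by rewrite gt_eqF.
  have hRL' : RL i != 0 by rewrite gt_eqF.
  rewrite (bigD1 i) //= eqxx locdiag //.
  set S := \sum_(j | j != i) _.
  have -> : S = \sum_(j | j != i) (if adj i j then sigma * a i j * u i * u j else 0).
    apply: eq_bigr => j; rewrite eq_sym => /negbTE ->; rewrite /a.
    case hadj: (adj i j) => /=; last by rewrite mulmx0 mulmx0 mul0mx mxE.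
    have hR' : Rl i j != 0 by rewrite gt_eqF // hRl_pos.
    by rewrite locoff /u; field; rewrite hR' hC'.
  have e1 : \sum_(j | j != i) (if adj i j then sigma * a i j * u i * u j else 0)
      = sigma * \sum_j a i j * (u i * u j).
    rewrite mulr_sumr [RHS](bigD1 i) //= {2}/a (negbTE (adj_irr i)) mul0r mulr0 add0r.
    apply: eq_bigr => j _; rewrite /a; case: (adj i j); [ring | by rewrite !mul0r mulr0].
  have e2 : \sum_(l | adj i l) 1 / (Rl i l * Ct i) = (\sum_j a i j) / Ct i.
    rewrite big_mkcond mulr_suml; apply: eq_bigr => j _; rewrite /a.
    case hadj: (adj i j) => //=; last by rewrite mul0r.
    have hR' : Rl i j != 0 by rewrite gt_eqF // hRl_pos.
    by field; rewrite hR' hC'.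
  have e3 : \sum_j a i j * (u i ^+ 2 - u i * u j)
      = (\sum_j a i j) * u i ^+ 2 - \sum_j a i j * (u i * u j).
    by rewrite mulr_suml -sumrB; apply: eq_bigr => j _; ring.
  rewrite e1 e2 e3 /neg /u; field.
  by rewrite hRL' hC' gt_eqF //= subr_eq0 gt_eqF.
have : \sum_i (neg i - sigma / RL i * u i ^+ 2 - sigma * \sum_j a i j * (u i ^+ 2 - u i * u j)) <= 0.
  rewrite sumrB -mulr_sumr.
  have h1 : \sum_i (neg i - sigma / RL i * u i ^+ 2) <= 0.
    rewrite -oppr_ge0 -sumrN; apply: sumr_ge0 => i _.
    have := hneg i; have : 0 <= sigma / RL i * u i ^+ 2.
      by apply: mulr_ge0; [apply: divr_ge0; exact: ltW | exact: sqr_ge0].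
    lra.
  have h2 : 0 <= \sum_i \sum_j a i j * (u i ^+ 2 - u i * u j).
    apply: lap => i j; rewrite /a.
      by rewrite adj_sym; case: (boolP (adj j i)) => // h; rewrite (hRl_sym _ _ h).
    by case: (boolP (adj i j)) => // h; rewrite divr_ge0 // ltW // hRl_pos.
  have : 0 <= sigma * \sum_i \sum_j a i j * (u i ^+ 2 - u i * u j) by rewrite mulr_ge0 // ltW.
  lra.
set T := \sum_i _.
move=> hT.
set S2 := \sum_i _ in hT.
have -> : T = S2 by apply: eq_bigr => i _; exact: rowi i.
have : 0 <= 2%:R :> R by []. nra.
Qed.
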